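(* Let $M\ge 2$, let $\gamma_1,\dots,\gamma_{M-1}$ be nonzero real numbers and $J_1,\dots,J_{M-1}$ real numbers, and consider on the open chain of $M$ sites $$H_{\gamma J}=\sum_{m=1}^{M-1}\Big(J_m c_{m+1}^\dagger c_m\sigma_{m+1}^+ + \text{h.c.}\Big) - \sum_{m=1}^{M-1}\Big(\gamma_m c_{m+1}^\dagger c_m + \text{h.c.}\Big).$$ Then the subspace of states with exactly two fermions and spin on site $1$ equal to $|\uparrow\rangle$ contains at least $2^{M-1}$ linearly independent states $|\Psi\rangle$ with $H_{\gamma J}|\Psi\rangle=0$.
   Context: Each site $m$ carries one spinless fermion mode ($c_m,c_m^\dagger$, canonical anticommutation relations) and one spin-$1/2$ with Pauli matrices $\sigma_m^{x,y,z}$; $\sigma_m^{\pm}=\sigma_m^x\pm i\sigma_m^y$. $H_{\gamma J}$ conserves the total fermion number and does not act on the spin at site $1$. *)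

(* Defs.v *)
From HB Require Import structures.
From mathcomp Require Import all_boot all_order all_algebra.
From mathcomp Require Import reals.
From mathcomp Require Import complex.
Set Implicit Arguments. Unset Strict Implicit. Unset Printing Implicit Defensive.
Import Order.TTheory GRing.Theory Num.Theory.
Local Open Scope ring_scope.
Local Open Scope complex_scope.

Section Chain.
Variables (R : realType) (M : nat).
Local Notation C := R[i].

(* Occupation-number / spin basis of the chain of M sites (sites 0..M-1 stand
   for the paper's sites 1..M).  A basis state assigns to each site a pair
   (n, s) : bool * bool, n = fermion occupation, s = true iff spin is up. *)
Definition bstate := {ffun 'I_M -> bool * bool}.

Definition at_site (s : bstate) (m : nat) : bool * bool :=
  if insub m is Some i then s i else (false, false).

Definition upd (s : bstate) (m : nat) (x : bool * bool) : bstate :=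
  [ffun i => if val i == m then x else s i].

(* Hilbert space C^(basis) = C^#|bstate|; operators are matrices given by
   their matrix elements <s'| O |s>. *)
Definition hdim := #|{: bstate}|.
Definition opmx (f : bstate -> bstate -> C) : 'M[C]_hdim :=
  \matrix_(i, j) f (enum_val i) (enum_val j).

Definition adj (A : 'M[C]_hdim) : 'M[C]_hdim := map_mx (@conjc R) A^T.

Definition jw (s : bstate) (m : nat) : C :=
  (-1) ^+ #|[set i : 'I_M | (val i < m)%N && (s i).1]|.

(* fermion annihilation operator c_m (Jordan-Wigner representation of the CAR) *)
Definition cop (m : nat) : 'M[C]_hdim :=
  opmx (fun s' s => if (at_site s m).1 && (s' == upd s m (false, (at_site s m).2))
                    then jw s m else 0).
Definition cdag (m : nat) : 'M[C]_hdim := adj (cop m).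

(* Pauli matrices on the spin of site m, basis (up, down) *)
Definition flip_sp (s' s : bstate) (m : nat) : bool :=
  s' == upd s m ((at_site s m).1, ~~ (at_site s m).2).
Definition sigx (m : nat) : 'M[C]_hdim :=
  opmx (fun s' s => if flip_sp s' s m then 1 else 0).
Definition sigy (m : nat) : 'M[C]_hdim :=
  opmx (fun s' s => if flip_sp s' s m then (if (at_site s m).2 then 'i else - 'i) else 0).
Definition sigz (m : nat) : 'M[C]_hdim :=
  opmx (fun s' s => if s' == s then (if (at_site s m).2 then 1 else -1) else 0).
Definition sigp (m : nat) : 'M[C]_hdim := sigx m + 'i *: sigy m.
Definition sigm (m : nat) : 'M[C]_hdim := sigx m - 'i *: sigy m.

(* H_{gamma J}; bond k (0 <= k < M-1) joins sites k and k+1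
   (paper's bond m = k+1 joining sites m, m+1) *)
Definition HgJ (J gam : 'I_M.-1 -> R) : 'M[C]_hdim :=
  \sum_(k < M.-1)
     (((J k)%:C *: (cdag k.+1 *m cop k *m sigp k.+1))
      + adj ((J k)%:C *: (cdag k.+1 *m cop k *m sigp k.+1)))
  - \sum_(k < M.-1)
     (((gam k)%:C *: (cdag k.+1 *m cop k))
      + adj ((gam k)%:C *: (cdag k.+1 *m cop k))).

Definition Nop : 'M[C]_hdim := \sum_(m < M) (cdag m *m cop m).

End Chain.

(* Main.v *)
Require Import Defs.
From HB Require Import structures.
From mathcomp Require Import all_boot all_order all_algebra.
From mathcomp Require Import reals.
From mathcomp Require Import complex.
From mathcomp Require Import zify.
Set Implicit Arguments. Unset Strict Implicit. Unset Printing Implicit Defensive.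
Import Order.TTheory GRing.Theory Num.Theory.
Local Open Scope ring_scope.
Local Open Scope complex_scope.
Section Supp.
Variables (R : realType) (M : nat).
Local Notation C := R[i].
Local Notation bs := (bstate M).
Local Notation n := (hdim M).
Local Notation ev := (@enum_val bs (pred_of_simpl predT)).

Definition supp (A : 'M[C]_n) (P : bs -> bs -> Prop) :=
  forall i j, A i j != 0 -> P (enum_val i) (enum_val j).

Lemma supp_mul A B P Q : supp A P -> supp B Q ->
  supp (A *m B) (fun x z => exists y, P x y /\ Q y z).
Proof.
move=> hA hB i j; rewrite mxE => nz.
case: (pickP (fun k => A i k * B k j != 0)) => [k /= hk | h0].
  move: hk; rewrite mulf_eq0 negb_or => /andP[h1 h2].
  by exists (enum_val k); split; [apply: hA | apply: hB].
move: nz; rewrite big1 ?eqxx // => k _.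
by move: (h0 k) => /negbFE/eqP.
Qed.

Lemma supp_adj A P : supp A P -> supp (adj A) (fun x z => P z x).
Proof. by move=> hA i j; rewrite !mxE conjc_eq0 => /hA. Qed.

Lemma supp_scale a A P : supp A P -> supp (a *: A) P.
Proof. by move=> hA i j; rewrite mxE mulf_eq0 negb_or => /andP[_ /hA]. Qed.

Lemma supp_add A B P Q : supp A P -> supp B Q ->
  supp (A + B) (fun x z => P x z \/ Q x z).
Proof.
move=> hA hB i j; rewrite mxE; case: (eqVneq (A i j) 0) => [->|/hA]; last by left.
by rewrite add0r => /hB; right.
Qed.

Lemma supp_sub A B P Q : supp A P -> supp B Q ->
  supp (A - B) (fun x z => P x z \/ Q x z).
Proof.
move=> hA hB i j; rewrite !mxE; case: (eqVneq (A i j) 0) => [->|/hA]; last by left.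
by rewrite add0r oppr_eq0 => /hB; right.
Qed.

Lemma supp_sum (I : finType) (F : I -> 'M[C]_n) (P : I -> bs -> bs -> Prop) :
  (forall k, supp (F k) (P k)) ->
  supp (\sum_k F k) (fun x z => exists k, P k x z).
Proof.
move=> hF i j; rewrite summxE => nz.
case: (pickP (fun k => F k i j != 0)) => [k /= hk | h0].
  by exists k; apply: hF.
move: nz; rewrite big1 ?eqxx // => k _.
by move: (h0 k) => /negbFE/eqP.
Qed.

Lemma supp_weaken A P Q : supp A P -> (forall x z, P x z -> Q x z) -> supp A Q.
Proof. by move=> hA hPQ i j /hA /hPQ. Qed.

Lemma supp_cop m : supp (cop R M m)
  (fun s' s => (at_site s m).1 /\ s' = upd s m (false, (at_site s m).2)).
Proof.
move=> i j; rewrite mxE; case: ifP => [/andP[h1 /eqP h2] _|]; first by [].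
by rewrite eqxx.
Qed.

Lemma supp_sigp m : supp (sigp R M m) (fun s' s => flip_sp s' s m).
Proof.
apply: supp_weaken.
  apply: (supp_add (P := fun s' s => flip_sp s' s m) (Q := fun s' s => flip_sp s' s m)); last apply: supp_scale.
    by move=> i j; rewrite mxE; case: ifP => [h _|] //; rewrite eqxx.
  by move=> i j; rewrite mxE; case: ifP => [h _|] //; rewrite eqxx.
by move=> x z [].
Qed.
End Supp.
Section Hop.
Variables (R : realType) (M : nat).
Local Notation C := R[i].
Local Notation bs := (bstate M).

Lemma at_site_ord (s : bs) (i : 'I_M) : at_site s i = s i.
Proof. by rewrite /at_site valK. Qed.

Lemma at_site_out (s : bs) x : (M <= x)%N -> at_site s x = (false, false).
Proof. by move=> h; rewrite /at_site insubN // -leqNgt. Qed.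

Lemma at_upd (s : bs) m y x :
  at_site (upd s m y) x = if (x == m) && (x < M)%N then y else at_site s x.
Proof.
case: (ltnP x M) => hx; last by rewrite andbF !at_site_out.
by rewrite andbT -[x]/(val (Ordinal hx)) !at_site_ord ffunE.
Qed.

Lemma bs_ext (s t : bs) : (forall x, (x < M)%N -> at_site s x = at_site t x) -> s = t.
Proof. by move=> h; apply/ffunP => i; rewrite -!at_site_ord h. Qed.

Definition Hop (k : nat) (s' s : bs) :=
  [/\ (at_site s k).1, ~~ (at_site s k.+1).1, at_site s' k = (false, (at_site s k).2),
      (at_site s' k.+1).1 & forall x, x != k -> x != k.+1 -> at_site s' x = at_site s x].

Lemma supp_term1 k : (k.+1 < M)%N ->
  supp (cdag R M k.+1 *m cop R M k *m sigp R M k.+1) (Hop k).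
Proof.
move=> hk; apply: supp_weaken.
  exact: (supp_mul (supp_mul (supp_adj (@supp_cop R M k.+1)) (@supp_cop R M k)) (@supp_sigp R M k.+1)).
move=> s' s [y2 [[y1 [[h1 e1] [h2 e2]]] /eqP e3]].
have hk0 : (k < M)%N by apply: ltnW.
have A3 x : at_site y2 x = if (x == k.+1) && (x < M)%N then ((at_site s k.+1).1, ~~ (at_site s k.+1).2) else at_site s x.
  by rewrite e3 at_upd.
have A2 x : at_site y1 x = if (x == k) && (x < M)%N then (false, (at_site y2 k).2) else at_site y2 x.
  by rewrite e2 at_upd.
have A1 x : at_site y1 x = if (x == k.+1) && (x < M)%N then (false, (at_site s' k.+1).2) else at_site s' x.
  by rewrite e1 at_upd.
split => //.
- by move: h2; rewrite A3 eqn_leq ltnn andbF.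
- move: (A2 k.+1); rewrite A1 A3 eqxx hk (gtn_eqF (ltnSn k)) /=.
  by rewrite (A3 k.+1) eqxx hk => -[<-].
- by move: (A1 k); rewrite A2 A3 eqxx hk0 (ltn_eqF (ltnSn k)) /= => <-.
- move=> x hx1 hx2; move: (A1 x); rewrite A2 (A3 x) (negbTE hx1) (negbTE hx2) /=.
  by move=> ->.
Qed.

Lemma supp_term2 k : (k.+1 < M)%N ->
  supp (cdag R M k.+1 *m cop R M k) (Hop k).
Proof.
move=> hk; apply: supp_weaken.
  exact: (supp_mul (supp_adj (@supp_cop R M k.+1)) (@supp_cop R M k)).
move=> s' s [y1 [[h1 e1] [h2 e2]]].
have hk0 : (k < M)%N by apply: ltnW.
have A2 x : at_site y1 x = if (x == k) && (x < M)%N then (false, (at_site s k).2) else at_site s x.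
  by rewrite e2 at_upd.
have A1 x : at_site y1 x = if (x == k.+1) && (x < M)%N then (false, (at_site s' k.+1).2) else at_site s' x.
  by rewrite e1 at_upd.
split => //.
- move: (A2 k.+1); rewrite A1 eqxx hk (gtn_eqF (ltnSn k)) /=.
  by move=> <-.
- by move: (A1 k); rewrite A2 eqxx hk0 (ltn_eqF (ltnSn k)) /= => <-.
- move=> x hx1 hx2; move: (A1 x); rewrite A2 (negbTE hx1) (negbTE hx2) /=.
  by move=> ->.
Qed.

Lemma supp_H (J gam : 'I_M.-1 -> R) : supp (HgJ J gam)
  (fun s' s => exists k : 'I_M.-1, Hop k s' s \/ Hop k s s').
Proof.
have hk (k : 'I_M.-1) : (k.+1 < M)%N by have := ltn_ord k; lia.
have T1 (k : 'I_M.-1) := supp_scale (a := (J k)%:C) (supp_term1 (hk k)).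
have T2 (k : 'I_M.-1) := supp_scale (a := (gam k)%:C) (supp_term2 (hk k)).
apply: supp_weaken.
  exact: (supp_sub (supp_sum (fun k => supp_add (T1 k) (supp_adj (T1 k))))
                   (supp_sum (fun k => supp_add (T2 k) (supp_adj (T2 k))))).
by move=> x z [] [k [h|h]]; exists k; [left|right|left|right].
Qed.
End Hop.
Section Num.
Variables (R : realType) (M : nat).
Local Notation C := R[i].
Local Notation bs := (bstate M).
Local Notation n := (hdim M).

Lemma sum_ev (F : bs -> C) (u : bs) :
  \sum_(k : 'I_n) (if enum_val k == u then F (enum_val k) else 0) = F u.
Proof.
rewrite (bigD1 (enum_rank u)) //= enum_rankK eqxx big1 ?addr0 // => k hk.
case: eqP => // e; case/eqP: hk; by rewrite -e enum_valK.
Qed.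

Lemma sum_ev2 (G : 'I_n -> C) (u : bs) c :
  \sum_(k : 'I_n) G k * (if enum_val k == u then c else 0) = G (enum_rank u) * c.
Proof.
rewrite (bigD1 (enum_rank u)) //= enum_rankK eqxx big1 ?addr0 // => k hk.
case: eqP => [e|]; last by rewrite mulr0.
case/eqP: hk; by rewrite -e enum_valK.
Qed.

Lemma upd_inj (s t : bs) m : (m < M)%N -> (at_site s m).1 -> (at_site t m).1 ->
  upd s m (false, (at_site s m).2) = upd t m (false, (at_site t m).2) -> s = t.
Proof.
move=> hm hs ht e; apply: bs_ext => x hx.
have := congr1 (fun w => at_site w x) e; rewrite /= !at_upd hx andbT.
case: eqP => [-> | //] [e2].
by move: hs ht; case: (at_site s m) e2 => a b; case: (at_site t m) => c d /= -> -> ->.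
Qed.

Lemma jw_sq (s : bs) m : (jw R s m)^* * jw R s m = 1.
Proof. by rewrite /jw rmorphXn rmorphN1 -exprMn mulrNN mulr1 expr1n. Qed.

Lemma Nop_term (m : 'I_M) (i j : 'I_n) :
  (cdag R M m *m cop R M m) i j = (i == j)%:R * ((enum_val j m).1)%:R.
Proof.
rewrite mxE.
under eq_bigr => k _ do rewrite !mxE.
set s := enum_val j.
have hm := ltn_ord m.
case hsm: (at_site s m).1; last first.
  rewrite big1 => [|k _]; last by rewrite andFb mulr0.
  by rewrite -at_site_ord hsm mulr0.
rewrite -at_site_ord hsm mulr1.
set u := upd s m (false, (at_site s m).2).
under eq_bigr => k _ do rewrite andTb.
rewrite sum_ev2 enum_rankK.
case: ifP => [/andP[h1 /eqP h2] | h].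
  have eij : enum_val i = s by apply: (upd_inj hm h1 hsm); rewrite -h2.
  have -> : i = j by apply: enum_val_inj.
  by rewrite eqxx -/s jw_sq.
have -> : (i == j) = false.
  apply/negP => /eqP eij; move: h; rewrite eij -/s hsm eqxx.
  by [].
by rewrite rmorph0 mul0r.
Qed.

Lemma Nop_entry (i j : 'I_n) :
  Nop R M i j = (i == j)%:R * (#|[set x | (enum_val j x).1]|)%:R.
Proof.
rewrite /Nop summxE.
rewrite (eq_bigr _ (fun m _ => Nop_term m i j)).
rewrite -mulr_sumr -natr_sum; congr (_ * _%:R).
rewrite -sum1_card [RHS]big_mkcond /=; apply: eq_bigr => x _.
by rewrite inE; case: (enum_val j x).1.
Qed.
End Num.
Section Comb.
Variable (M : nat).
Local Notation bs := (bstate M).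
Local Notation SP := {ffun 'I_M.-1 -> bool}.

Definition spf (σ : SP) (x : nat) : bool :=
  if x is y.+1 then oapp σ false (insub y) else true.

Lemma spfS (σ : SP) (o : 'I_M.-1) : spf σ o.+1 = σ o.
Proof. by rewrite /= valK. Qed.

Definition mkD (p : 'I_M.-1 * SP) : bs :=
  [ffun x : 'I_M => ((val x == p.1) || (val x == (p.1).+1), spf p.2 x)].
Definition mkT (p : 'I_M.-2 * SP) : bs :=
  [ffun x : 'I_M => ((val x == p.1) || (val x == (p.1).+2), spf p.2 x)].

Lemma at_mk (f : nat -> bool * bool) x :
  at_site [ffun y : 'I_M => f (val y)] x = if (x < M)%N then f x else (false, false).
Proof.
case: ltnP => hx; last by rewrite at_site_out.
by rewrite -[x]/(val (Ordinal hx)) at_site_ord ffunE.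
Qed.

Lemma at_mkD p x : at_site (mkD p) x =
  if (x < M)%N then ((x == p.1) || (x == (p.1).+1), spf p.2 x) else (false, false).
Proof. exact: (at_mk (fun y => ((y == p.1) || (y == (p.1).+1), spf p.2 y))). Qed.

Lemma at_mkT p x : at_site (mkT p) x =
  if (x < M)%N then ((x == p.1) || (x == (p.1).+2), spf p.2 x) else (false, false).
Proof. exact: (at_mk (fun y => ((y == p.1) || (y == (p.1).+2), spf p.2 y))). Qed.

Lemma mkD_inj : injective mkD.
Proof.
move=> [a σ] [b τ] e.
have E x : (x < M)%N -> ((x == a) || (x == a.+1), spf σ x) = ((x == b) || (x == b.+1), spf τ x).
  by move=> hx; have := congr1 (fun w => at_site w x) e; rewrite /= !at_mkD hx.
have ha : (a < M)%N by have := ltn_ord a; lia.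
have hb : (b < M)%N by have := ltn_ord b; lia.
have hab : a = b :> nat.
  case: (E _ ha) => e1 _; case: (E _ hb) => e2 _.
  move: e1 e2; rewrite !eqxx /=; lia.
congr pair; first exact: val_inj.
apply/ffunP => o; have ho : (o.+1 < M)%N by have := ltn_ord o; lia.
by move: (E _ ho) => [] _; rewrite valK.
Qed.

Lemma mkT_inj : injective mkT.
Proof.
move=> [a σ] [b τ] e.
have E x : (x < M)%N -> ((x == a) || (x == a.+2), spf σ x) = ((x == b) || (x == b.+2), spf τ x).
  by move=> hx; have := congr1 (fun w => at_site w x) e; rewrite /= !at_mkT hx.
have ha : (a < M)%N by have := ltn_ord a; lia.
have hb : (b < M)%N by have := ltn_ord b; lia.
have hab : a = b :> nat.
  case: (E _ ha) => e1 _; case: (E _ hb) => e2 _.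
  move: e1 e2; rewrite !eqxx /=; lia.
congr pair; first exact: val_inj.
apply/ffunP => o; have ho : (o.+1 < M)%N by have := ltn_ord o; lia.
by move: (E _ ho) => [] _; rewrite valK.
Qed.

Definition tauf (s : bs) : SP := [ffun o : 'I_M.-1 => (at_site s o.+1).2].

Lemma mkT_char (s : bs) (j : 'I_M.-2) :
  (at_site s 0).2 ->
  (forall x, (x < M)%N -> (at_site s x).1 = (x == j) || (x == j.+2)) ->
  s = mkT (j, tauf s).
Proof.
move=> h0 h; apply: bs_ext => x hx; rewrite at_mkT hx /=.
rewrite [LHS]surjective_pairing h //; congr pair.
case: x hx => [|y] hy //=.
have hy' : (y < M.-1)%N by lia.
by rewrite insubT /= ffunE.
Qed.
Lemma hop_img p (s' : bs) k : (k.+1 < M)%N ->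
  Hop k s' (mkD p) \/ Hop k (mkD p) s' -> exists q, s' = mkT q.
Proof.
move=> hk; case: p => [a σ]; have ha := ltn_ord a.
have hk0 : (k < M)%N by lia.
case=> -[h1 h2 h3 h4 h5].
- move: h1 h2; rewrite !at_mkD hk hk0 /= => h1 h2.
  have ka : k = a.+1 by lia.
  have hj : (a < M.-2)%N by lia.
  exists (Ordinal hj, tauf s'); apply: mkT_char => /=.
    have hM0 : (0 < M)%N by lia.
    case: (eqVneq k 0) => [k0|kn0]; first by lia.
    by rewrite h5 ?at_mkD ?hM0 // eq_sym.
  move=> x hx.
  case: (eqVneq x k) => [->|xk]; first by rewrite h3 /=; lia.
  case: (eqVneq x k.+1) => [->|xk1]; first by rewrite h4; lia.
  by rewrite h5 // at_mkD hx /=; lia.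
- move: h3 h4; rewrite !at_mkD hk hk0 /= => h3 h4.
  case: h3 => h3 h3'.
  have ka : k.+1 = a by lia.
  have hj : (k < M.-2)%N by lia.
  exists (Ordinal hj, tauf s'); apply: mkT_char => /=.
    case: (eqVneq k 0) => [k0|kn0].
      by move: h3'; rewrite k0 /= => <-.
    have hM0 : (0 < M)%N by lia.
    by rewrite -h5 ?at_mkD ?hM0 // eq_sym.
  move=> x hx.
  case: (eqVneq x k) => [->|xk]; first by rewrite h1; lia.
  case: (eqVneq x k.+1) => [->|xk1]; first by rewrite (negbTE h2); lia.
  by rewrite -h5 // at_mkD hx /=; lia.
Qed.
End Comb.
Section Sums.
Variable (R : realType).
Local Notation C := R[i].

Lemma sumL (T : finType) (G : 'I_#|{: T}| -> C) (u : T) :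
  \sum_k ((enum_val k == u)%:R * G k) = G (enum_rank u).
Proof.
rewrite (bigD1 (enum_rank u)) //= enum_rankK eqxx mul1r big1 ?addr0 // => k hk.
case: eqP => [e|]; last by rewrite mul0r.
case/eqP: hk; by rewrite -e enum_valK.
Qed.

Lemma sumR (T : finType) (G : 'I_#|{: T}| -> C) (u : T) :
  \sum_k (G k * (enum_val k == u)%:R) = G (enum_rank u).
Proof. rewrite -(sumL G u); apply: eq_bigr => k _; exact: mulrC. Qed.

Lemma row_tr_eig m p (P : 'M[C]_(m, p)) (Y : 'M[C]_p) c k :
  P *m Y^T = c *: P -> Y *m (row k P)^T = c *: (row k P)^T.
Proof.
move=> h; rewrite -[Y]trmxK -trmx_mul -row_mul h.
by apply/matrixP => a b; rewrite !mxE.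
Qed.
End Sums.

Section Main.
Variables (R : realType) (M : nat).
Local Notation C := R[i].
Local Notation bs := (bstate M).
Local Notation n := (hdim M).
Local Notation SP := {ffun 'I_M.-1 -> bool}.
Definition DT := ('I_M.-1 * SP)%type.
Definition TT := ('I_M.-2 * SP)%type.

Definition BD : 'M[C]_(#|{: DT}|, n) :=
  \matrix_(r, c) ((enum_val c == mkD (enum_val r))%:R).
Definition BT : 'M[C]_(#|{: TT}|, n) :=
  \matrix_(r, c) ((enum_val c == mkT (enum_val r))%:R).

Lemma BD_free : row_free BD.
Proof.
apply/row_freeP; exists BD^T; apply/matrixP => r r'.
rewrite !mxE.
under eq_bigr => c _ do rewrite !mxE.
rewrite sumL enum_rankK.
by rewrite (inj_eq (@mkD_inj M)) (inj_eq enum_val_inj).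
Qed.

Lemma card_mkD (p : DT) : #|[set x | (mkD p x).1]| = 2.
Proof.
case: p => [a σ].
have ha : (a < M)%N by have := ltn_ord a; lia.
have ha1 : (a.+1 < M)%N by have := ltn_ord a; lia.
have -> : [set x | (mkD (a, σ) x).1] = [set Ordinal ha; Ordinal ha1].
  by apply/setP => x; rewrite !inE ffunE /= -!val_eqE.
by rewrite cards2 -val_eqE /= (ltn_eqF (ltnSn a)).
Qed.

Lemma BD_N : BD *m (Nop R M)^T = 2%:R *: BD.
Proof.
apply/matrixP => r c; rewrite !mxE.
under eq_bigr => d _ do rewrite !mxE Nop_entry.
rewrite (bigD1 c) //= big1 ?addr0 => [|d hd]; last by rewrite [c == d]eq_sym (negbTE hd) mul0r mulr0.
rewrite eqxx mul1r; case: eqP => [->|]; last by rewrite !mul0r mulr0.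
by rewrite card_mkD mul1r mulr1.
Qed.

Lemma BD_sz : BD *m (sigz R M 0)^T = BD.
Proof.
apply/matrixP => r c; rewrite !mxE.
under eq_bigr => d _ do rewrite !mxE.
rewrite (bigD1 c) //= big1 ?addr0 => [|d hd]; last first.
  case: (eqVneq (enum_val c) (enum_val d)) => [e|ne]; last by rewrite mulr0.
  by case/eqP: hd; apply: enum_val_inj.
rewrite eqxx; case: eqP => [->|]; last by rewrite !mul0r.
have hM : (0 < M)%N by have := ltn_ord (enum_val r).1; lia.
by rewrite at_mkD hM /= mulr1.
Qed.

Lemma BD_H (J gam : 'I_M.-1 -> R) : (BD *m (HgJ J gam)^T <= BT)%MS.
Proof.
set A := BD *m _.
have -> : A = (A *m BT^T) *m BT.
  apply/matrixP => p c; rewrite [RHS]mxE.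
  under eq_bigr => q _ do rewrite !mxE.
  under eq_bigr => q _ do under eq_bigr => d _ do rewrite !mxE.
  under eq_bigr => q _ do rewrite sumR.
  have eA x : \sum_j BD p j * (HgJ J gam)^T j x = A p x by rewrite [RHS]mxE.
  under eq_bigr => q _ do rewrite eA.
  case: (pickP (fun t : TT => enum_val c == mkT t)) => [t0 /eqP ht0 | hn].
    rewrite (bigD1 (enum_rank t0)) //= enum_rankK -ht0 enum_valK eqxx mulr1.
    rewrite big1 ?addr0 // => q hq.
    case: eqP => [e|]; last by rewrite mulr0.
    case/eqP: hq; apply: enum_val_inj; rewrite enum_rankK.
    by apply: (@mkT_inj M); rewrite -e -ht0.
  rewrite big1 => [|q _]; last by rewrite hn mulr0.
  apply/eqP; apply: contraT => nz.
  have [k hk] : exists k : 'I_M.-1, Hop k (enum_val c) (mkD (enum_val p)) \/ Hop k (mkD (enum_val p)) (enum_val c).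
    move: nz; rewrite /A mxE.
    under eq_bigr => d _ do rewrite [BD p d]mxE [(HgJ J gam)^T d c]mxE.
    rewrite sumL => nz2; have := supp_H nz2; rewrite enum_rankK; exact.
  have hk1 : (k.+1 < M)%N by have := ltn_ord k; lia.
  have [q eq] := hop_img hk1 hk.
  by move: (hn q); rewrite eq eqxx.
exact: submxMl.
Qed.

Lemma card_DT : (2 <= M)%N -> #|{: DT}| = (#|{: TT}| + 2 ^ (M - 1))%N.
Proof.
move=> hM; rewrite /DT /TT !card_prod card_ffun !card_ord card_bool subn1.
set e := (2 ^ M.-1)%N.
have -> : M.-1 = (M.-2).+1 by lia.
by rewrite mulSn addnC.
Qed.
End Main.

Theorem mainTheorem4 (R : realType) (M : nat) (hM : (2 <= M)%N)
    (J gam : 'I_M.-1 -> R) (hgam : forall k, gam k != 0) :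
  exists P : 'M[R[i]]_(2 ^ (M - 1), hdim M),
    row_free P /\
    forall k : 'I_(2 ^ (M - 1)),
      let v := (row k P)^T in
      [/\ Nop R M *m v = 2%:R *: v,
          sigz R M 0 *m v = v &
          HgJ J gam *m v = 0].
Proof.
set A := BD R M *m (HgJ J gam)^T.
set K := kermx A.
set X := K *m BD R M.
have rX : (2 ^ (M - 1) <= \rank X)%N.
  rewrite /X mxrankMfree ?BD_free // mxrank_ker.
  have h1 := mxrankS (BD_H J gam).
  have h2 := rank_leq_row (BT R M).
  have h3 := card_DT hM.
  rewrite -/A in h1; move: h1 h2 h3; lia.
pose P := (pid_mx (2 ^ (M - 1)) : 'M[R[i]]_(2 ^ (M - 1), \rank X)) *m row_base X.
exists P; split.
  by rewrite /row_free /P mxrankMfree ?row_base_free // rank_pid_mx.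
have PX : (P <= X)%MS.
  by rewrite /P; apply: submx_trans (submxMl _ _) _; rewrite eq_row_base.
have PB : (P <= BD R M)%MS by apply: submx_trans PX (submxMl _ _).
move=> k /=; split.
- apply: row_tr_eig.
  case/submxP: PB => W ->.
  by rewrite -mulmxA BD_N scalemxAr.
- rewrite -[X in _ = X]scale1r; apply: row_tr_eig; rewrite scale1r.
  case/submxP: PB => W ->.
  by rewrite -mulmxA BD_sz.
- rewrite -[RHS](scale0r (row k P)^T); apply: row_tr_eig; rewrite scale0r.
  case/submxP: PX => W ->.
  have XA : X *m (HgJ J gam)^T = 0 by rewrite /X -mulmxA; exact: mulmx_ker.
  by rewrite -mulmxA XA mulmx0.
Qed.
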